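(* Let $\mathcal{L}$ be a Lie algebra over $\mathbf{k}$, $k\in\mathbf{k}$ nonzero, and let $((\mathcal{U},q),i)$ be the enveloping$^{6\text{-th}}$ algebra of $\mathcal{L}$; write $x$ for $i(x)$. Then there exist algebra homomorphisms $\varepsilon:\mathcal{U}\to\mathbf{k}$ and $\Delta:\mathcal{U}\to\mathcal{U}\otimes\mathcal{U}$ such that: $\Delta(q)=q\otimes q$; for $x\in\mathcal{L}$, $$\Delta(x)=(x+kqx-xq)\otimes1+1\otimes(x+kqx-xq)+(1-k)qx\otimes q+(1-k)q\otimes qx;$$ $(\mathrm{id}\otimes\Delta)\Delta=(\Delta\otimes\mathrm{id})\Delta$; $\varepsilon(q)=1$ and $\varepsilon(x)=0$ for $x\in\mathcal{L}$; and for all $a\in\mathcal{U}$, $(\varepsilon\otimes\mathrm{id})\Delta(a)=1\otimes\sigma(a)$ and $(\mathrm{id}\otimes\varepsilon)\Delta(a)=\sigma(a)\otimes1$, where $\sigma(a)=a+qa-aq$.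
   Context: Invariant algebra: for an associative algebra $A$ with identity and idempotent $q$, $(A,q)=\{x\in A: qxq=qx\}$; $\mathrm{Lie}(A,q)$ is $(A,q)$ with bracket $[x,y]_{6,k}=xy-yx-xyq+yxq+kxqy-kyqx$; invariant homomorphisms are unital multiplicative linear maps preserving distinguished idempotents. The enveloping$^{6\text{-th}}$ algebra $((\mathcal{U},q),i)$: $(\mathcal{U},q)$ an invariant algebra (here equal to all of $\mathcal{U}$), $i:\mathcal{L}\to\mathrm{Lie}(\mathcal{U},q)$ a Lie homomorphism, universal: every Lie homomorphism from $\mathcal{L}$ into $\mathrm{Lie}(A,q_A)$ of an invariant algebra factors uniquely through $i$ via an invariant homomorphism. Algebra homomorphisms are unital. *)

(* Defs.v *)
From HB Require Import structures.
From mathcomp Require Import all_boot all_algebra.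
From Stdlib Require Import ClassicalEpsilon.
Set Implicit Arguments. Unset Strict Implicit. Unset Printing Implicit Defensive.
Import GRing.Theory.
Local Open Scope ring_scope.

Section Defs.
Variable F : fieldType.

Definition lin (V W : lmodType F) (f : V -> W) : Prop :=
  forall (a : F) (x y : V), f (a *: x + y) = a *: f x + f y.

Definition bilin (V W M : lmodType F) (f : V -> W -> M) : Prop :=
  (forall y, lin (fun x => f x y)) /\ (forall x, lin (f x)).

Definition alg_hom (A B : algType F) (f : A -> B) : Prop :=
  lin f /\ f 1 = 1 /\ forall x y, f (x * y) = f x * f y.

Definition is_lie_bracket (L : lmodType F) (br : L -> L -> L) : Prop :=
  bilin br /\ (forall x, br x x = 0) /\
  (forall x y z, br x (br y z) + br y (br z x) + br z (br x y) = 0).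

Definition inv_mem (A : algType F) (q x : A) : Prop := q * x * q = q * x.

Definition br6 (k : F) (A : algType F) (q x y : A) : A :=
  x * y - y * x - x * y * q + y * x * q + k *: (x * q * y) - k *: (y * q * x).

Definition lie_hom6 (k : F) (L : lmodType F) (br : L -> L -> L)
  (A : algType F) (q : A) (f : L -> A) : Prop :=
  lin f /\ (forall x, inv_mem q (f x)) /\
  forall x y, f (br x y) = br6 k q (f x) (f y).

Definition inv_hom (A B : algType F) (q : A) (qB : B) (phi : A -> B) : Prop :=
  lin phi /\ phi 1 = 1 /\ (forall x y, phi (x * y) = phi x * phi y) /\
  phi q = qB /\ (forall x, inv_mem q x -> inv_mem qB (phi x)).

Definition is_env6 (k : F) (L : lmodType F) (br : L -> L -> L)
  (U : algType F) (q : U) (i : L -> U) : Prop :=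
  q * q = q /\ (forall x : U, inv_mem q x) /\ lie_hom6 k br q i /\
  forall (A : algType F) (qA : A), qA * qA = qA ->
  forall f : L -> A, lie_hom6 k br qA f ->
  exists phi : U -> A, (inv_hom q qA phi /\ forall x, phi (i x) = f x) /\
    forall psi : U -> A, inv_hom q qA psi -> (forall x, psi (i x) = f x) ->
      forall u, psi u = phi u.

End Defs.

(* A tensor product A (x) B of F-algebras, given by its universal property
   (as F-vector spaces) together with its algebra structure on pure tensors. *)
Record tensor (F : fieldType) (A B : algType F) := Tensor {
  tT :> algType F;
  tens : A -> B -> tT;
  tens_bilin : bilin tens;
  tens_one : tens 1 1 = 1;
  tens_mul : forall a a' b b', tens a b * tens a' b' = tens (a * a') (b * b');
  tens_univ : forall (M : lmodType F) (f : A -> B -> M), bilin f ->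
    exists g : tT -> M, (lin g /\ forall a b, g (tens a b) = f a b) /\
      forall g' : tT -> M, lin g' -> (forall a b, g' (tens a b) = f a b) ->
        forall t, g' t = g t
}.
Arguments tens {F A B} t _ _.

Definition tmap (F : fieldType) (A B C D : algType F)
  (T : tensor A B) (T' : tensor C D) (f : A -> C) (g : B -> D) : T -> T' :=
  epsilon (inhabits (fun _ => 0))
    (fun h : T -> T' => lin h /\ forall a b, h (tens T a b) = tens T' (f a) (g b)).

Definition tassoc (F : fieldType) (A B C : algType F)
  (TBC : tensor B C) (TAB : tensor A B)
  (T1 : tensor A TBC) (T2 : tensor TAB C) : T1 -> T2 :=
  epsilon (inhabits (fun _ => 0))
    (fun h : T1 -> T2 => lin h /\
       forall a b c, h (tens T1 a (tens TBC b c)) = tens T2 (tens TAB a b) c).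
Arguments tassoc {F A B C TBC TAB} T1 T2 _.
Arguments tmap {F A B C D} T T' f g _.

(* Main.v *)
Require Import Defs.
From HB Require Import structures.
From mathcomp Require Import all_boot all_algebra.
From mathcomp Require Import ring.
From Stdlib Require Import ClassicalEpsilon.
Set Implicit Arguments. Unset Strict Implicit. Unset Printing Implicit Defensive.
Import GRing.Theory.
Local Open Scope ring_scope.

Lemma lin0 (F : fieldType) (V W : lmodType F) (f : V -> W) : lin f -> f 0 = 0.
Proof. move=> H; have := H 1 0 0; rewrite !scale1r !addr0 => h.
by apply: (addrI (f 0)); rewrite addr0 -h. Qed.
Lemma linD (F : fieldType) (V W : lmodType F) (f : V -> W) : lin f -> forall x y, f (x + y) = f x + f y.
Proof. by move=> H x y; have := H 1 x y; rewrite !scale1r. Qed.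
Lemma linZ (F : fieldType) (V W : lmodType F) (f : V -> W) : lin f -> forall a x, f (a *: x) = a *: f x.
Proof. by move=> H a x; rewrite -(addr0 (a *: x)) H (lin0 H) addr0. Qed.
Lemma linN (F : fieldType) (V W : lmodType F) (f : V -> W) : lin f -> forall x, f (- x) = - f x.
Proof. by move=> H x; rewrite -scaleN1r (linZ H) scaleN1r. Qed.
Lemma linB (F : fieldType) (V W : lmodType F) (f : V -> W) : lin f -> forall x y, f (x - y) = f x - f y.
Proof. by move=> H x y; rewrite (linD H) (linN H). Qed.

Lemma lin_comp (F : fieldType) (V W X : lmodType F) (f : V -> W) (g : W -> X) :
  lin f -> lin g -> lin (fun x => g (f x)).
Proof. by move=> Hf Hg a x y; rewrite Hf Hg. Qed.
Lemma lin_id (F : fieldType) (V : lmodType F) : lin (fun x : V => x).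
Proof. by []. Qed.
Lemma lin_add (F : fieldType) (V W : lmodType F) (f g : V -> W) :
  lin f -> lin g -> lin (fun x => f x + g x).
Proof. move=> Hf Hg a x y; rewrite Hf Hg scalerDr.
by rewrite -!addrA; congr (_ + _); rewrite addrCA. Qed.
Lemma lin_sub (F : fieldType) (V W : lmodType F) (f g : V -> W) :
  lin f -> lin g -> lin (fun x => f x - g x).
Proof. move=> Hf Hg a x y; rewrite Hf Hg scalerBr opprD.
by rewrite -!addrA; congr (_ + _); rewrite addrCA. Qed.
Lemma lin_scale (F : fieldType) (V W : lmodType F) (f : V -> W) (c : F) :
  lin f -> lin (fun x => c *: f x).
Proof. by move=> Hf a x y; rewrite Hf scalerDr !scalerA mulrC. Qed.
Lemma lin_mull (F : fieldType) (A : algType F) (a : A) : lin (fun x => a * x).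
Proof. by move=> c x y; rewrite mulrDr scalerAr. Qed.
Lemma lin_mulr (F : fieldType) (A : algType F) (a : A) : lin (fun x => x * a).
Proof. by move=> c x y; rewrite mulrDl scalerAl. Qed.
Lemma lin_cst0 (F : fieldType) (V W : lmodType F) : lin (fun _ : V => (0 : W)).
Proof. by move=> a x y; rewrite scaler0 addr0. Qed.


Lemma tensl (F : fieldType) (A B : algType F) (T : tensor A B) (b : B) : lin (fun a => tens T a b).
Proof. by case: (tens_bilin T). Qed.
Lemma tensr (F : fieldType) (A B : algType F) (T : tensor A B) (a : A) : lin (tens T a).
Proof. by case: (tens_bilin T). Qed.

Lemma tens_ext (F : fieldType) (A B : algType F) (T : tensor A B) (M : lmodType F)
  (g1 g2 : T -> M) : lin g1 -> lin g2 ->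
  (forall a b, g1 (tens T a b) = g2 (tens T a b)) -> forall t, g1 t = g2 t.
Proof.
move=> H1 H2 H t.
have Hb : bilin (fun a b => g2 (tens T a b)).
  by split=> [b|a]; [exact: (lin_comp (tensl T b) H2)|exact: (lin_comp (tensr T a) H2)].
have [g [[Hg Hg'] U]] := tens_univ T Hb.
by rewrite (U g1 H1 H t) (U g2 H2 (fun _ _ => erefl) t).
Qed.

Lemma tens_ext2 (F : fieldType) (A B : algType F) (T : tensor A B) (M : lmodType F)
  (G1 G2 : T -> T -> M) :
  (forall t, lin (G1 t)) -> (forall t, lin (G2 t)) ->
  (forall t', lin (fun t => G1 t t')) -> (forall t', lin (fun t => G2 t t')) ->
  (forall a b a' b', G1 (tens T a b) (tens T a' b') = G2 (tens T a b) (tens T a' b')) ->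
  forall t t', G1 t t' = G2 t t'.
Proof.
move=> H1 H2 H1' H2' H t t'.
have Hp : forall a b t', G1 (tens T a b) t' = G2 (tens T a b) t'.
  by move=> a b; apply: tens_ext => //; exact: H.
exact: (tens_ext (H1' t') (H2' t') (fun a b => Hp a b t') t).
Qed.

Lemma tmap_spec (F : fieldType) (A B C D : algType F) (T : tensor A B) (T' : tensor C D)
  (f : A -> C) (g : B -> D) : lin f -> lin g ->
  lin (tmap T T' f g) /\ forall a b, tmap T T' f g (tens T a b) = tens T' (f a) (g b).
Proof.
move=> Hf Hg; rewrite /tmap.
eapply epsilon_spec.
have Hb : bilin (fun a b => tens T' (f a) (g b)).
  by split=> [b|a]; [exact: (lin_comp Hf (tensl T' (g b)))|exact: (lin_comp Hg (tensr T' (f a)))].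
by have [h [[H1 H2] _]] := tens_univ T Hb; exists h.
Qed.

Lemma tassoc_spec (F : fieldType) (A B C : algType F)
  (TBC : tensor B C) (TAB : tensor A B) (T1 : tensor A TBC) (T2 : tensor TAB C) :
  lin (tassoc T1 T2) /\
  forall a b c, tassoc T1 T2 (tens T1 a (tens TBC b c)) = tens T2 (tens TAB a b) c.
Proof.
rewrite /tassoc.
eapply epsilon_spec.
have Ga : forall a : A, exists g : TBC -> T2, lin g /\ forall b c, g (tens TBC b c) = tens T2 (tens TAB a b) c.
  move=> a.
  have Hb : bilin (fun b c => tens T2 (tens TAB a b) c).
    by split=> [c|b]; [exact: (lin_comp (tensr TAB a) (tensl T2 c))|exact: (tensr T2 _)].
  by have [h [[H1 H2] _]] := tens_univ TBC Hb; exists h.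
pose G a := epsilon (inhabits (fun _ : TBC => (0 : T2)))
   (fun g : TBC -> T2 => lin g /\ forall b c, g (tens TBC b c) = tens T2 (tens TAB a b) c).
have HG : forall a, lin (G a) /\ forall b c, G a (tens TBC b c) = tens T2 (tens TAB a b) c.
  move=> a; eapply epsilon_spec; exact: Ga.
have Hb : bilin G.
  split=> [s|a]; last by case: (HG a).
  move=> c a a'.
  have H1 : lin (fun s => G (c *: a + a') s) by case: (HG (c *: a + a')).
  have H2 : lin (fun s => c *: G a s + G a' s).
    by apply: lin_add; [apply: lin_scale; case: (HG a)| case: (HG a')].
  apply: (tens_ext H1 H2) => b d.
  case: (HG (c *: a + a')) => _ ->; case: (HG a) => _ ->; case: (HG a') => _ ->.
  by rewrite (tensl TAB b) (tensl T2 d).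
have [h [[H1 H2] _]] := tens_univ T1 Hb; exists h; split => // a b c.
by rewrite H2; case: (HG a) => _ ->.
Qed.

Definition Phi (F : fieldType) (V : lmodType F) (s : seq V) (p : {poly F}) : V :=
  \sum_(i < size s) p`_i *: s`_i.

Lemma PhiD (F : fieldType) (V : lmodType F) (s : seq V) p r : Phi s p + Phi s r = Phi s (p + r).
Proof. by rewrite /Phi -big_split; apply: eq_bigr => i _; rewrite coefD scalerDl. Qed.
Lemma PhiN (F : fieldType) (V : lmodType F) (s : seq V) p : - Phi s p = Phi s (- p).
Proof. by rewrite /Phi -sumrN; apply: eq_bigr => i _; rewrite coefN scaleNr. Qed.
Lemma PhiZ (F : fieldType) (V : lmodType F) (s : seq V) c p : c *: Phi s p = Phi s (c%:P * p).
Proof. by rewrite /Phi scaler_sumr; apply: eq_bigr => i _; rewrite mul_polyC coefZ scalerA. Qed.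
Lemma Phi0 (F : fieldType) (V : lmodType F) (s : seq V) : 0 = Phi s 0.
Proof. by rewrite /Phi big1 // => i _; rewrite coef0 scale0r. Qed.
Lemma PhiX (F : fieldType) (V : lmodType F) (s : seq V) n : (n < size s)%N -> Phi s 'X^n = s`_n.
Proof.
move=> Hn; rewrite /Phi (bigD1 (Ordinal Hn)) //= coefXn eqxx scale1r big1 ?addr0 //.
move=> j Hj; rewrite coefXn; case: eqP => [Ej|]; last by rewrite scale0r.
by case/eqP: Hj; apply: val_inj.
Qed.

Ltac zatoms s l n := lazymatch l with
 | nil => idtac
 | cons ?v ?l' => rewrite -[v](@PhiX _ _ s n erefl); zatoms s l' (S n)
 end.

Ltac zsolve l := let s := fresh "s" in set s := l; zatoms s l 0%N;
  rewrite ?(PhiD, PhiN, PhiZ); apply: f_equal; rewrite ?polyCB ?polyCM ?polyCD ?polyCN; ring.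

Lemma test (F : fieldType) (V : lmodType F) (k : F) (a b c : V) :
  a + k *: b - c + (1 - k) *: b + c = a + b.
Proof. zsolve [:: a; b; c]. Qed.

Lemma tmap_alg (F : fieldType) (A B C D : algType F) (T : tensor A B) (T' : tensor C D)
  (f : A -> C) (g : B -> D) : alg_hom f -> alg_hom g -> alg_hom (tmap T T' f g).
Proof.
move=> [Hf [f1 fM]] [Hg [g1 gM]].
have [Hh Hp] := tmap_spec T T' Hf Hg.
split=> //; split; first by rewrite -(tens_one T) Hp f1 g1 tens_one.
apply: tens_ext2.
- by move=> t; exact: (lin_comp (lin_mull t) Hh).
- by move=> t; exact: (lin_comp Hh (lin_mull _)).
- by move=> t; exact: (lin_comp (lin_mulr t) Hh).
- by move=> t; exact: (lin_comp Hh (lin_mulr _)).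
by move=> a b a' b'; rewrite tens_mul !Hp fM gM tens_mul.
Qed.

Lemma tassoc_alg (F : fieldType) (A B C : algType F)
  (TBC : tensor B C) (TAB : tensor A B) (T1 : tensor A TBC) (T2 : tensor TAB C) :
  alg_hom (tassoc T1 T2).
Proof.
have [Hh Hp] := tassoc_spec T1 T2.
set h := tassoc T1 T2 in Hh Hp *.
split=> //; split; first by rewrite -(tens_one T1) -(tens_one TBC) Hp !tens_one.
apply: tens_ext2.
- by move=> t; exact: (lin_comp (lin_mull t) Hh).
- by move=> t; exact: (lin_comp Hh (lin_mull _)).
- by move=> t; exact: (lin_comp (lin_mulr t) Hh).
- by move=> t; exact: (lin_comp Hh (lin_mulr _)).
move=> a s a' s'; rewrite tens_mul.
move: s s'; apply: (tens_ext2 (G1 := fun s s' => h (tens T1 (a * a') (s * s')))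
   (G2 := fun s s' => h (tens T1 a s) * h (tens T1 a' s'))).
- by move=> t; exact: (lin_comp (lin_mull t) (lin_comp (tensr T1 _) Hh)).
- by move=> t; exact: (lin_comp (lin_comp (tensr T1 _) Hh) (lin_mull _)).
- by move=> t; exact: (lin_comp (lin_mulr t) (lin_comp (tensr T1 _) Hh)).
- by move=> t; exact: (lin_comp (lin_comp (tensr T1 _) Hh) (lin_mulr _)).
by move=> b c b' c'; rewrite tens_mul !Hp !tens_mul.
Qed.

Lemma alg_comp (F : fieldType) (A B C : algType F) (f : A -> B) (g : B -> C) :
  alg_hom f -> alg_hom g -> alg_hom (fun x => g (f x)).
Proof.
move=> [Hf [f1 fM]] [Hg [g1 gM]]; split; first exact: lin_comp.
by split; [rewrite f1 g1 | move=> x y; rewrite fM gM].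
Qed.

Lemma alg_inv (F : fieldType) (A B : algType F) (q : A) (qB : B) (f : A -> B) :
  alg_hom f -> f q = qB -> inv_hom q qB f.
Proof.
move=> [Hf [f1 fM]] fq; do 4!split => //.
by move=> x; rewrite /inv_mem => Hx; rewrite -fq -!fM Hx.
Qed.

Lemma inv_alg (F : fieldType) (A B : algType F) (q : A) (qB : B) (f : A -> B) :
  inv_hom q qB f -> alg_hom f.
Proof. by move=> [? [? [? _]]]. Qed.

Lemma lie_comp (F : fieldType) (k : F) (L : lmodType F) (br : L -> L -> L)
  (A B : algType F) (q : A) (qB : B) (f : L -> A) (g : A -> B) :
  lie_hom6 k br q f -> alg_hom g -> g q = qB -> lie_hom6 k br qB (fun x => g (f x)).
Proof.
move=> [Hf [Hi Hb]] [Hg [g1 gM]] gq; split; first exact: lin_comp.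
split.
  by move=> x; rewrite /inv_mem -gq -!gM Hi.
move=> x y; rewrite Hb /br6 !(linB Hg) !(linD Hg) !(linN Hg) !(linZ Hg) !gM gq.
by [].
Qed.

Definition yk (F : fieldType) (k : F) (A : algType F) (q x : A) := locked (x + k *: (q * x) - x * q).
Lemma ykE (F : fieldType) (k : F) (A : algType F) (q x : A) : yk k q x = x + k *: (q * x) - x * q.
Proof. by rewrite /yk -lock. Qed.

Lemma mqq (F : fieldType) (A : algType F) (q x : A) : q * q = q -> x * q * q = x * q.
Proof. by move=> hq; rewrite -mulrA hq. Qed.
Lemma qabq (F : fieldType) (A : algType F) (q : A) : (forall u, q * u * q = q * u) ->
  forall a b, q * a * b * q = q * a * b.
Proof. by move=> h a b; rewrite -(mulrA q a b) h mulrA. Qed.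
Lemma xqbq (F : fieldType) (A : algType F) (q : A) : (forall u, q * u * q = q * u) ->
  forall x b, x * q * b * q = x * q * b.
Proof. by move=> h x b; rewrite -(mulrA x q b) -mulrA h !mulrA. Qed.

Lemma sAl (F : fieldType) (A : algType F) (k : F) (u v : A) : k *: u * v = k *: (u * v).
Proof. by rewrite scalerAl. Qed.
Lemma sAr (F : fieldType) (A : algType F) (k : F) (u v : A) : u * (k *: v) = k *: (u * v).
Proof. by rewrite scalerAr. Qed.

Lemma yk_yk (F : fieldType) (k : F) (A : algType F) (q : A) (hq : q * q = q)
  (h : forall u, q * u * q = q * u) (a b : A) :
  yk k q a * yk k q b = a * b - a * b * q + (k * k) *: (q * a * b).
Proof.
rewrite !ykE !(mulrDl, mulrBl, mulrDr, mulrBr) !(mulrN, mulNr, opprK, sAl, sAr, scalerA) !mulrA.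
rewrite h (qabq h) (mqq _ hq) (xqbq h).
zsolve [:: a * q * b; q * a * b; a * b * q; a * b].
Qed.

Ltac usimp h hq := rewrite ?(mulrDl, mulrBl, mulrDr, mulrBr) ?(mulrN, mulNr, opprK, sAl, sAr, scalerA) ?mulrA;
  rewrite ?h ?(qabq h) ?(mqq _ hq) ?(xqbq h) ?hq.

Lemma q_yk (F : fieldType) (k : F) (A : algType F) (q : A) (hq : q * q = q)
  (h : forall u, q * u * q = q * u) (a : A) : q * yk k q a = k *: (q * a).
Proof. rewrite ykE; usimp h hq; zsolve [:: q * a]. Qed.

Lemma yk_q (F : fieldType) (k : F) (A : algType F) (q : A) (hq : q * q = q)
  (h : forall u, q * u * q = q * u) (a : A) : yk k q a * q = k *: (q * a).
Proof. rewrite ykE; usimp h hq; zsolve [:: q * a; a * q]. Qed.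

Lemma q_br6 (F : fieldType) (k : F) (A : algType F) (q : A) (hq : q * q = q)
  (h : forall u, q * u * q = q * u) (a b : A) :
  q * br6 k q a b = k *: (q * a * b - q * b * a).
Proof. rewrite /br6; usimp h hq; zsolve [:: q * a * b; q * b * a]. Qed.

Lemma br6_q (F : fieldType) (k : F) (A : algType F) (q : A) (hq : q * q = q)
  (h : forall u, q * u * q = q * u) (a b : A) :
  br6 k q a b * q = k *: (a * q * b - b * q * a).
Proof. rewrite /br6; usimp h hq; zsolve [:: a * q * b; b * q * a; a * b * q; b * a * q]. Qed.

Lemma yk_br6 (F : fieldType) (k : F) (A : algType F) (q : A) (hq : q * q = q)
  (h : forall u, q * u * q = q * u) (a b : A) :
  yk k q (br6 k q a b) = yk k q a * yk k q b - yk k q b * yk k q a.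
Proof.
rewrite !yk_yk // ykE (q_br6 _ hq h) (br6_q _ hq h) /br6.
rewrite ?(scalerBr, scalerA).
zsolve [:: a * q * b; b * q * a; a * b * q; b * a * q; q * a * b; q * b * a; a * b; b * a].
Qed.

Lemma xq_yk (F : fieldType) (k : F) (A : algType F) (q : A) (hq : q * q = q)
  (h : forall u, q * u * q = q * u) (x a : A) : x * q * yk k q a = k *: (x * q * a).
Proof. by rewrite -mulrA (q_yk _ hq h) sAr mulrA. Qed.
Lemma qx_yk (F : fieldType) (k : F) (A : algType F) (q : A) (hq : q * q = q)
  (h : forall u, q * u * q = q * u) (x a : A) : q * x * yk k q a = k *: (q * x * a).
Proof. by rewrite -h (xq_yk _ hq h) h. Qed.
Lemma x_yk_q (F : fieldType) (k : F) (A : algType F) (q : A) (hq : q * q = q)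
  (h : forall u, q * u * q = q * u) (x a : A) : x * yk k q a * q = k *: (x * q * a).
Proof. by rewrite -mulrA (yk_q _ hq h) sAr mulrA. Qed.

Lemma tDl (F : fieldType) (A B : algType F) (T : tensor A B) a a' b : tens T (a + a') b = tens T a b + tens T a' b.
Proof. exact: (linD (tensl T b)). Qed.
Lemma tBl (F : fieldType) (A B : algType F) (T : tensor A B) a a' b : tens T (a - a') b = tens T a b - tens T a' b.
Proof. exact: (linB (tensl T b)). Qed.
Lemma tNl (F : fieldType) (A B : algType F) (T : tensor A B) a b : tens T (- a) b = - tens T a b.
Proof. exact: (linN (tensl T b)). Qed.
Lemma tZl (F : fieldType) (A B : algType F) (T : tensor A B) c a b : tens T (c *: a) b = c *: tens T a b.
Proof. exact: (linZ (tensl T b)). Qed.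
Lemma tDr (F : fieldType) (A B : algType F) (T : tensor A B) a b b' : tens T a (b + b') = tens T a b + tens T a b'.
Proof. exact: (linD (tensr T a)). Qed.
Lemma tBr (F : fieldType) (A B : algType F) (T : tensor A B) a b b' : tens T a (b - b') = tens T a b - tens T a b'.
Proof. exact: (linB (tensr T a)). Qed.
Lemma tNr (F : fieldType) (A B : algType F) (T : tensor A B) a b : tens T a (- b) = - tens T a b.
Proof. exact: (linN (tensr T a)). Qed.
Lemma tZr (F : fieldType) (A B : algType F) (T : tensor A B) c a b : tens T a (c *: b) = c *: tens T a b.
Proof. exact: (linZ (tensr T a)). Qed.

Definition Dm (F : fieldType) (k : F) (U : algType F) (q : U) (T : tensor U U) (a : U) : T :=
  tens T (yk k q a) 1 + tens T 1 (yk k q a) + (1 - k) *: tens T (q * a) q + (1 - k) *: tens T q (q * a).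

Ltac tpipe h hq :=
  do 3 rewrite ?mulrDl ?mulrDr;
  do 2 rewrite ?mulrN ?mulNr ?opprK ?sAl ?sAr ?scalerA;
  rewrite ?tens_mul;
  rewrite ?mulrA ?mulr1 ?mul1r;
  do 3 rewrite ?hq ?h ?(qabq h) ?(mqq _ hq) ?(xqbq h) ?(q_yk _ hq h) ?(yk_q _ hq h) ?(xq_yk _ hq h) ?(qx_yk _ hq h)
           ?(x_yk_q _ hq h) ?sAl ?sAr ?scalerA ?mulrA;
  do 2 rewrite ?tDl ?tBl ?tNl ?tZl ?tDr ?tBr ?tNr ?tZr ?scalerA ?scalerN ?opprK.

Ltac tsimp h hq :=
  rewrite ?(mulrDl, mulrBl, mulrDr, mulrBr, mulrN, mulNr, opprK, sAl, sAr, scalerA, mulr1, mul1r, tens_mul);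
  rewrite ?mulrA;
  rewrite ?(hq, h, qabq h, mqq _ hq, xqbq h, q_yk _ hq h, yk_q _ hq h, xq_yk _ hq h, qx_yk _ hq h,
            x_yk_q _ hq h, sAl, sAr, scalerA, mulrA, mulr1, mul1r);
  rewrite ?(tDl, tBl, tNl, tZl, tDr, tBr, tNr, tZr, scalerA, scalerN, opprK, scalerBr, scalerDr).

Lemma Dm_br6 (F : fieldType) (k : F) (U : algType F) (q : U) (hq : q * q = q)
  (h : forall u, q * u * q = q * u) (T : tensor U U) (a b : U) :
  Dm k q T (br6 k q a b) = br6 k (tens T q q) (Dm k q T a) (Dm k q T b).
Proof.
rewrite /Dm (yk_br6 _ hq h) (q_br6 _ hq h).
rewrite /br6.
do 3 rewrite ?mulrDl ?mulrDr.
do 2 rewrite ?mulrN ?mulNr ?opprK ?sAl ?sAr ?scalerA.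
rewrite ?tens_mul.
rewrite ?mulrA ?mulr1 ?mul1r.
do 3 rewrite ?hq ?h ?(qabq h) ?(mqq _ hq) ?(xqbq h) ?(q_yk _ hq h) ?(yk_q _ hq h) ?(xq_yk _ hq h) ?(qx_yk _ hq h)
           ?(x_yk_q _ hq h) ?sAl ?sAr ?scalerA ?mulrA.
do 2 rewrite ?tDl ?tBl ?tNl ?tZl ?tDr ?tBr ?tNr ?tZr ?scalerA ?scalerN ?opprK.
zsolve [:: tens T (q * a * b) q; tens T (q * a) (q * b); tens T (q * b * a) q; tens T (q * b) (q * a);
  tens T (yk k q a * yk k q b) 1; tens T (yk k q a) (yk k q b); tens T (yk k q b * yk k q a) 1;
  tens T (yk k q b) (yk k q a); tens T 1 (yk k q a * yk k q b); tens T 1 (yk k q b * yk k q a);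
  tens T q (q * a * b); tens T q (q * b * a)].
Qed.

Lemma lin_yk (F : fieldType) (k : F) (A : algType F) (q : A) : lin (yk k q).
Proof.
have H := lin_sub (lin_add (@lin_id _ A) (lin_scale k (lin_mull q))) (lin_mulr q).
by move=> c x y; rewrite !ykE; exact: H.
Qed.

Lemma lin_Dm (F : fieldType) (k : F) (U : algType F) (q : U) (T : tensor U U) : lin (Dm k q T).
Proof.
apply: lin_add; first apply: lin_add; first apply: lin_add.
- exact: (lin_comp (lin_yk k q) (tensl T 1)).
- exact: (lin_comp (lin_yk k q) (tensr T 1)).
- exact: (lin_scale _ (lin_comp (lin_mull q) (tensl T q))).
- exact: (lin_scale _ (lin_comp (lin_mull q) (tensr T q))).
Qed.

Lemma inv_Dm (F : fieldType) (k : F) (U : algType F) (q : U) (hq : q * q = q)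
  (h : forall u, q * u * q = q * u) (T : tensor U U) (a : U) :
  tens T q q * Dm k q T a * tens T q q = tens T q q * Dm k q T a.
Proof.
rewrite /Dm; tpipe h hq.
zsolve [:: tens T (q * a) q; tens T q (q * a)].
Qed.

Lemma Dm_q (F : fieldType) (k : F) (U : algType F) (q : U) (hq : q * q = q)
  (h : forall u, q * u * q = q * u) (T : tensor U U) (a : U) :
  tens T q q * Dm k q T a = tens T (q * a) q + tens T q (q * a).
Proof.
rewrite /Dm; tpipe h hq.
zsolve [:: tens T (q * a) q; tens T q (q * a)].
Qed.

Lemma Dm_y (F : fieldType) (k : F) (U : algType F) (q : U) (hq : q * q = q)
  (h : forall u, q * u * q = q * u) (T : tensor U U) (a : U) :
  Dm k q T a + k *: (tens T q q * Dm k q T a) - Dm k q T a * tens T q q =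
  tens T (yk k q a) 1 + tens T 1 (yk k q a).
Proof.
rewrite /Dm; tpipe h hq.
zsolve [:: tens T (q * a) q; tens T q (q * a); tens T (yk k q a) 1; tens T 1 (yk k q a)].
Qed.

Lemma coassoc_gen (F : fieldType) (k : F) (U : algType F) (q : U) (hq : q * q = q)
  (h : forall u, q * u * q = q * u)
  (UU : tensor U U) (U_UU : tensor U UU) (UU_U : tensor UU U)
  (D : U -> UU) (HD : alg_hom D) (Dq : D q = tens UU q q) (a : U) (Da : D a = Dm k q UU a) :
  tassoc U_UU UU_U (tmap UU U_UU id D (D a)) = tmap UU UU_U D id (D a).
Proof.
have [Dl [D1 DM]] := HD.
have Dy : D (yk k q a) = tens UU (yk k q a) 1 + tens UU 1 (yk k q a).
  by rewrite ykE (linB Dl) (linD Dl) (linZ Dl) !DM Da Dq (Dm_y _ hq h) ykE.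
have Dqa : D (q * a) = tens UU (q * a) q + tens UU q (q * a).
  by rewrite DM Da Dq (Dm_q _ hq h).
have [Hm1 Hp1] := tmap_spec UU U_UU (@lin_id _ U) Dl.
have [Hm2 Hp2] := tmap_spec UU UU_U Dl (@lin_id _ U).
have [Ha Hpa] := tassoc_spec U_UU UU_U.
rewrite Da /Dm !(linD Hm1) !(linZ Hm1) !Hp1 !(linD Hm2) !(linZ Hm2) !Hp2 /=.
rewrite Dy Dqa Dq D1 -(tens_one UU).
do 3 rewrite ?tDl ?tBl ?tNl ?tZl ?tDr ?tBr ?tNr ?tZr ?(linD Ha) ?(linZ Ha) ?Hpa.
zsolve [:: tens UU_U (tens UU (yk k q a) 1) 1; tens UU_U (tens UU 1 (yk k q a)) 1;
  tens UU_U (tens UU 1 1) (yk k q a); tens UU_U (tens UU (q * a) q) q;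
  tens UU_U (tens UU q (q * a)) q; tens UU_U (tens UU q q) (q * a)].
Qed.

Lemma t0l (F : fieldType) (A B : algType F) (T : tensor A B) b : tens T 0 b = 0.
Proof. exact: (lin0 (tensl T b)). Qed.
Lemma t0r (F : fieldType) (A B : algType F) (T : tensor A B) a : tens T a 0 = 0.
Proof. exact: (lin0 (tensr T a)). Qed.

Lemma counitl_gen (F : fieldType) (k : F) (U : algType F) (q : U) (hq : q * q = q)
  (h : forall u, q * u * q = q * u) (UU : tensor U U) (kU : tensor F^o U)
  (e : U -> F^o) (He : alg_hom e) (eq1 : e q = 1) (a : U) (ea : e a = 0) :
  tmap UU kU e id (Dm k q UU a) = tens kU 1 (yk 1 q a).
Proof.
have [El [E1 EM]] := He.
have [Hm Hp] := tmap_spec UU kU El (@lin_id _ U).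
rewrite /Dm !(linD Hm) !(linZ Hm) !Hp /= ykE (linB El) (linD El) (linZ El) !EM ea eq1 E1 !ykE.
rewrite ?mulr0 ?mul0r ?scaler0 ?subrr ?addr0 ?tDl ?tBl ?tNl ?tZl ?tDr ?tBr ?tNr ?tZr.
rewrite !(t0l kU) ?subrr ?scaler0 ?add0r ?addr0.
zsolve [:: tens kU 1 (q * a); tens kU 1 (a * q); tens kU 1 a].
Qed.

Lemma counitr_gen (F : fieldType) (k : F) (U : algType F) (q : U) (hq : q * q = q)
  (h : forall u, q * u * q = q * u) (UU : tensor U U) (Uk : tensor U F^o)
  (e : U -> F^o) (He : alg_hom e) (eq1 : e q = 1) (a : U) (ea : e a = 0) :
  tmap UU Uk id e (Dm k q UU a) = tens Uk (yk 1 q a) 1.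
Proof.
have [El [E1 EM]] := He.
have [Hm Hp] := tmap_spec UU Uk (@lin_id _ U) El.
rewrite /Dm !(linD Hm) !(linZ Hm) !Hp /= ykE (linB El) (linD El) (linZ El) !EM ea eq1 E1 !ykE.
rewrite ?mulr0 ?mul0r ?scaler0 ?subrr ?addr0 ?tDl ?tBl ?tNl ?tZl ?tDr ?tBr ?tNr ?tZr.
rewrite !(t0r Uk) ?subrr ?scaler0 ?add0r ?addr0.
zsolve [:: tens Uk (q * a) 1; tens Uk (a * q) 1; tens Uk a 1].
Qed.

Lemma env_exists (F : fieldType) (k : F) (L : lmodType F) (br : L -> L -> L)
  (U : algType F) (q : U) (i : L -> U) (HU : is_env6 k br q i)
  (A : algType F) (qA : A) (hA : qA * qA = qA) (f : L -> A) (Hf : lie_hom6 k br qA f) :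
  exists phi : U -> A, alg_hom phi /\ phi q = qA /\ forall x, phi (i x) = f x.
Proof.
case: HU => _ [_ [_ Hu]]; have [phi [[Hp Hpi] _]] := Hu A qA hA f Hf.
by exists phi; case: Hp => [? [? [? [? _]]]].
Qed.

Lemma env_uniq (F : fieldType) (k : F) (L : lmodType F) (br : L -> L -> L)
  (U : algType F) (q : U) (i : L -> U) (HU : is_env6 k br q i)
  (A : algType F) (qA : A) (hA : qA * qA = qA) (g1 g2 : U -> A) :
  alg_hom g1 -> alg_hom g2 -> g1 q = qA -> g2 q = qA ->
  (forall x, g1 (i x) = g2 (i x)) -> forall u, g1 u = g2 u.
Proof.
move=> H1 H2 q1 q2 E u.
case: HU => _ [_ [Hi Hu]].
have Hf := lie_comp Hi H2 q2.
have [phi [_ U']] := Hu A qA hA _ Hf.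
by rewrite (U' g1 (alg_inv H1 q1) E u) (U' g2 (alg_inv H2 q2) (fun _ => erefl) u).
Qed.

Lemma alg_id (F : fieldType) (A : algType F) : alg_hom (@id A).
Proof. by split. Qed.

Lemma alg_sigma (F : fieldType) (U : algType F) (q : U) (hq : q * q = q)
  (h : forall u, q * u * q = q * u) : alg_hom (fun a => a + q * a - a * q).
Proof.
split.
  have H := lin_sub (lin_add (@lin_id _ U) (lin_mull q)) (lin_mulr q).
  by move=> c x y; exact: H.
split; first by rewrite mulr1 mul1r addrK.
move=> a b.
have := yk_yk 1 hq h a b; rewrite !ykE mulr1 !scale1r => ->.
by rewrite !mulrA addrAC.
Qed.

Lemma alg_tensl (F : fieldType) (A B : algType F) (T : tensor A B) (g : B -> B) :
  alg_hom g -> alg_hom (fun b => tens T 1 (g b)).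
Proof.
move=> [gl [g1 gM]]; split; first exact: (lin_comp gl (tensr T 1)).
by split; [rewrite g1 tens_one | move=> x y; rewrite gM tens_mul mulr1].
Qed.
Lemma alg_tensr (F : fieldType) (A B : algType F) (T : tensor A B) (g : A -> A) :
  alg_hom g -> alg_hom (fun a => tens T (g a) 1).
Proof.
move=> [gl [g1 gM]]; split; first exact: (lin_comp gl (tensl T 1)).
by split; [rewrite g1 tens_one | move=> x y; rewrite gM tens_mul mulr1].
Qed.

Theorem proposition7p3 (F : fieldType) (k : F) (hk : k != 0)
  (L : lmodType F) (br : L -> L -> L) (HL : is_lie_bracket br)
  (U : algType F) (q : U) (i : L -> U) (HU : is_env6 k br q i)
  (UU : tensor U U) (U_UU : tensor U UU) (UU_U : tensor UU U)
  (kU : tensor F^o U) (Uk : tensor U F^o) :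
  let sigma := fun a : U => a + q * a - a * q in
  exists (eps : U -> F^o) (Delta : U -> UU),
    alg_hom eps /\ alg_hom Delta /\
    Delta q = tens UU q q /\
    (forall x : L,
       Delta (i x) =
         tens UU (i x + k *: (q * i x) - i x * q) 1
       + tens UU 1 (i x + k *: (q * i x) - i x * q)
       + (1 - k) *: tens UU (q * i x) q
       + (1 - k) *: tens UU q (q * i x)) /\
    (forall a : U,
       tassoc U_UU UU_U (tmap UU U_UU id Delta (Delta a))
       = tmap UU UU_U Delta id (Delta a)) /\
    eps q = 1 /\ (forall x : L, eps (i x) = 0) /\
    (forall a : U, tmap UU kU eps id (Delta a) = tens kU 1 (sigma a)) /\
    (forall a : U, tmap UU Uk id eps (Delta a) = tens Uk (sigma a) 1).
Proof.
move=> sigma.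
have [hq [hinv [Hi _]]] := HU.
have h : forall u, q * u * q = q * u by exact: hinv.
have He0 : lie_hom6 k br (1 : F^o) (fun _ => 0).
  split; first exact: lin_cst0.
  split; first by move=> x; rewrite /inv_mem !mulr1.
  by move=> x y; rewrite /br6 !(mulr0, mul0r, scaler0, subrr, addr0).
have [e [He [eq1 ei]]] := env_exists HU (mulr1 (1 : F^o)) He0.
have hE : tens UU q q * tens UU q q = tens UU q q by rewrite tens_mul hq.
have HDm : lie_hom6 k br (tens UU q q) (fun x => Dm k q UU (i x)).
  case: Hi => Hil [_ Hib].
  split; first exact: (lin_comp Hil (lin_Dm k q UU)).
  split; first by move=> x; rewrite /inv_mem (inv_Dm _ hq h).
  by move=> x y; rewrite Hib (Dm_br6 _ hq h).
have [D [HD [Dq Di]]] := env_exists HU hE HDm.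
have sigmaE : forall a, sigma a = yk 1 q a by move=> a; rewrite ykE scale1r.
exists e, D; split => //; split => //; split => //.
split; first by move=> x; rewrite Di /Dm !ykE.
split.
  apply: (@env_uniq _ k L br U q i HU UU_U (tens UU_U (tens UU q q) q) _
     (fun a => tassoc U_UU UU_U (tmap UU U_UU id D (D a))) (fun a => tmap UU UU_U D id (D a))).
  - by rewrite !tens_mul hq.
  - exact: (alg_comp HD (alg_comp (tmap_alg UU U_UU (@alg_id _ U) HD) (tassoc_alg U_UU UU_U))).
  - exact: (alg_comp HD (tmap_alg UU UU_U HD (@alg_id _ U))).
  - have [Dl _] := HD.
    have [_ Hp1] := tmap_spec UU U_UU (@lin_id _ U) Dl.
    have [_ Hpa] := tassoc_spec U_UU UU_U.
    by rewrite Dq Hp1 /= Dq Hpa.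
  - have [Dl _] := HD.
    have [_ Hp2] := tmap_spec UU UU_U Dl (@lin_id _ U).
    by rewrite Dq Hp2 Dq.
  - by move=> x; apply: (coassoc_gen hq h) => //; exact: Di.
split => //; split => //.
have [El _] := He.
have Hs := alg_sigma hq h.
have sq : sigma q = q by rewrite /sigma hq addrK.
split.
  apply: (@env_uniq _ k L br U q i HU kU (tens kU 1 q) _
     (fun a => tmap UU kU e id (D a)) (fun a => tens kU 1 (sigma a))).
  - by rewrite tens_mul mulr1 hq.
  - exact: (alg_comp HD (tmap_alg UU kU He (@alg_id _ U))).
  - exact: (alg_tensl kU Hs).
  - have [_ Hp] := tmap_spec UU kU El (@lin_id _ U).
    by rewrite Dq Hp eq1.
  - by rewrite sq.
  - by move=> x; rewrite Di (counitl_gen _ hq h) // sigmaE.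
apply: (@env_uniq _ k L br U q i HU Uk (tens Uk q 1) _
   (fun a => tmap UU Uk id e (D a)) (fun a => tens Uk (sigma a) 1)).
- by rewrite tens_mul mulr1 hq.
- exact: (alg_comp HD (tmap_alg UU Uk (@alg_id _ U) He)).
- exact: (alg_tensr Uk Hs).
- have [_ Hp] := tmap_spec UU Uk (@lin_id _ U) El.
  by rewrite Dq Hp eq1.
- by rewrite sq.
- by move=> x; rewrite Di (counitr_gen _ hq h) // sigmaE.
Qed.
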